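(* Let $0 \le \alpha \le \beta < \infty$, let $\varphi\colon \mathbb{R} \to \mathbb{R}$ satisfy $\alpha \le \frac{\varphi(a) - \varphi(b)}{a - b} \le \beta$ for all $a \ne b$, and let $\phi\colon \mathbb{R}^{n_1}\to\mathbb{R}^{n_1}$ act componentwise by $\varphi$. Let $H \in \mathbb{R}^{m \times n_0}$, $G \in \mathbb{R}^{m \times n_1}$, $W \in \mathbb{R}^{n_1 \times n_0}$ and $h(x) = Hx + G\phi(Wx)$. Suppose $T \in \mathbb{R}^{n_1 \times n_1}$ is diagonal and satisfies $G^\top G \preceq T$. Then for all $x, x' \in \mathbb{R}^{n_0}$, $$\|h(x) - h(x')\|_2 \le \Big(\Big\|H + \frac{\alpha+\beta}{2} G W\Big\|_2 + \frac{\beta - \alpha}{2}\,\|W^\top T W\|_2^{1/2}\Big)\|x - x'\|_2.$$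
   Context: $\|A\|_2$ denotes the spectral norm (largest singular value) of a matrix $A$; $\preceq$ is the Loewner order on symmetric matrices. *)

(* Defs.v *)
From HB Require Import structures.
From mathcomp Require Import all_boot all_order all_algebra.
From mathcomp Require Import boolp classical_sets reals.
Set Implicit Arguments. Unset Strict Implicit. Unset Printing Implicit Defensive.
Import Order.TTheory GRing.Theory Num.Theory.
Local Open Scope ring_scope.
Local Open Scope classical_set_scope.

Definition vnorm2 (R : realType) (n : nat) (x : 'cV[R]_n) : R :=
  Num.sqrt (\sum_(i < n) x i 0 ^+ 2).

(* Largest eigenvalue of a (symmetric) square matrix; the sup of the
   (finite) set of its real eigenvalues (0 for the empty 0x0 matrix). *)
Definition lambda_max (R : realType) (n : nat) (S : 'M[R]_n) : R :=
  sup [set a : R | eigenvalue S a].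

Definition specnorm (R : realType) (m n : nat) (A : 'M[R]_(m, n)) : R :=
  Num.sqrt (lambda_max (A^T *m A)).

Definition loewner_le (R : realType) (n : nat) (A B : 'M[R]_n) : Prop :=
  A^T = A /\ B^T = B /\
  forall v : 'cV[R]_n, 0 <= (v^T *m (B - A) *m v) 0 0.

Definition compwise (R : realType) (n : nat) (f : R -> R) (v : 'cV[R]_n) : 'cV[R]_n :=
  map_mx f v.

(* Main.v *)
Require Import Defs.
From HB Require Import structures.
From mathcomp Require Import all_boot all_order all_algebra.
From mathcomp Require Import boolp classical_sets reals.
From mathcomp Require Import ring lra.
Import Order.TTheory GRing.Theory Num.Theory.
Local Open Scope ring_scope.

Section Aux.
Set Implicit Arguments. Unset Strict Implicit. Unset Printing Implicit Defensive.
Local Open Scope classical_set_scope.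
Variable R : realType.

Definition dotv n (u v : 'cV[R]_n) : R := \sum_i u i 0 * v i 0.

Lemma dotvC n (u v : 'cV[R]_n) : dotv u v = dotv v u.
Proof. by apply: eq_bigr => i _; rewrite mulrC. Qed.

Lemma dotvDl n (u w v : 'cV[R]_n) : dotv (u + w) v = dotv u v + dotv w v.
Proof. by rewrite /dotv -big_split; apply: eq_bigr => i _; rewrite mxE mulrDl. Qed.

Lemma dotvZl n a (u v : 'cV[R]_n) : dotv (a *: u) v = a * dotv u v.
Proof. by rewrite /dotv mulr_sumr; apply: eq_bigr => i _; rewrite mxE mulrA. Qed.

Lemma dotvNl n (u v : 'cV[R]_n) : dotv (- u) v = - dotv u v.
Proof. by rewrite -scaleN1r dotvZl mulN1r. Qed.

Lemma dotvDr n (u w v : 'cV[R]_n) : dotv v (u + w) = dotv v u + dotv v w.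
Proof. by rewrite !(dotvC v) dotvDl. Qed.

Lemma dotvZr n a (u v : 'cV[R]_n) : dotv v (a *: u) = a * dotv v u.
Proof. by rewrite !(dotvC v) dotvZl. Qed.

Lemma dotvNr n (u v : 'cV[R]_n) : dotv v (- u) = - dotv v u.
Proof. by rewrite !(dotvC v) dotvNl. Qed.

Lemma dotv_ge0 n (u : 'cV[R]_n) : 0 <= dotv u u.
Proof. by apply: sumr_ge0 => i _; rewrite -expr2 sqr_ge0. Qed.

Lemma dotv_eq0 n (u : 'cV[R]_n) : dotv u u = 0 -> u = 0.
Proof.
move=> /eqP; rewrite psumr_eq0 => [/allP H|i _]; last by rewrite -expr2 sqr_ge0.
apply/matrixP => i j; rewrite (ord1 j) mxE.
by have := H i (mem_index_enum _); rewrite -expr2 sqrf_eq0 => /eqP.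
Qed.

Lemma dotv_tr n m (A : 'M[R]_(n, m)) u v :
  dotv u (A *m v) = dotv (A^T *m u) v.
Proof.
rewrite /dotv.
under eq_bigr => i _ do rewrite mxE mulr_sumr.
rewrite exchange_big /=; apply: eq_bigr => j _.
rewrite mxE mulr_suml; apply: eq_bigr => i _; rewrite mxE; ring.
Qed.

Lemma dotv_sym n (M : 'M[R]_n) u v : M^T = M ->
  dotv u (M *m v) = dotv v (M *m u).
Proof. by move=> hM; rewrite dotv_tr hM dotvC. Qed.

Lemma vnorm2E n (x : 'cV[R]_n) : vnorm2 x = Num.sqrt (dotv x x).
Proof. by rewrite /vnorm2; congr Num.sqrt; apply: eq_bigr => i _; rewrite expr2. Qed.

Lemma quadP (a b c : R) : 0 <= c -> (forall t, 0 <= a + 2 * b * t + c * t ^+ 2) ->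
  b ^+ 2 <= a * c.
Proof.
move=> c0 H.
have [cz|cp] := eqVneq c 0.
  have [bz|bn] := eqVneq b 0; first by rewrite bz cz; lra.
  have := H (- (a + 1) / (2 * b)); rewrite cz mul0r addr0.
  have -> : 2 * b * (- (a + 1) / (2 * b)) = - (a + 1) by field.
  idtac.
  lra.
have cpos : 0 < c by rewrite lt_neqAle eq_sym cp c0.
have := H (- b / c).
have -> : a + 2 * b * (- b / c) + c * (- b / c) ^+ 2 = (a * c - b ^+ 2) / c by field.
by rewrite pmulr_lge0 ?invr_gt0 // subr_ge0.
Qed.


Lemma CS_form n (M : 'M[R]_n) u w : M^T = M ->
  (forall v, 0 <= dotv v (M *m v)) ->
  dotv u (M *m w) ^+ 2 <= dotv u (M *m u) * dotv w (M *m w).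
Proof.
move=> hM hpos; apply: quadP; first exact: hpos.
move=> t; have := hpos (u + t *: w).
rewrite mulmxDr -scalemxAr !dotvDl !dotvDr !dotvZl !dotvZr (dotv_sym u w hM).
by move=> h; apply: le_trans h _; rewrite le_eqVlt; apply/orP; left; apply/eqP; ring.
Qed.

Lemma CS n (u w : 'cV[R]_n) : dotv u w ^+ 2 <= dotv u u * dotv w w.
Proof.
have := @CS_form n 1%:M u w (tr_scalar_mx _ _) (fun v => _).
by rewrite !mul1mx; apply => v; rewrite mul1mx dotv_ge0.
Qed.

Lemma op_bound p q (A : 'M[R]_(p, q)) : exists K, 0 <= K /\
  forall v, dotv (A *m v) (A *m v) <= K * dotv v v.
Proof.
exists (\sum_i dotv (row i A)^T (row i A)^T); split.
  by apply: sumr_ge0 => i _; apply: dotv_ge0.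
move=> v; rewrite mulr_suml; apply: ler_sum => i _.
have -> : (A *m v) i 0 = dotv (row i A)^T v.
  by rewrite mxE; apply: eq_bigr => j _; rewrite !mxE.
by rewrite -expr2; apply: CS.
Qed.

Lemma sq_bound (x y K : R) : 0 <= y -> 0 <= K -> x ^+ 2 <= K * y ^+ 2 -> x <= (K + 1) * y.
Proof.
move=> y0 K0 h; rewrite leNgt; apply/negP => hlt.
have h1 : 0 <= (K + 1) * y by rewrite mulr_ge0 // addr_ge0.
have h2 : ((K + 1) * y) ^+ 2 < x ^+ 2 by rewrite ltr_pXn2r // ?nnegrE ?(ltW (le_lt_trans h1 hlt)).
have h3 : K * y ^+ 2 <= ((K + 1) * y) ^+ 2 by rewrite exprMn ler_wpM2r ?sqr_ge0 //; nra.
lra.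
Qed.

Lemma form_bound n (A : 'M[R]_n) : exists B, 0 <= B /\
  forall w, dotv w (A *m w) <= B * dotv w w.
Proof.
have [K [K0 HK]] := op_bound A.
exists (K + 1); split; first lra.
move=> w; apply: sq_bound => //; first exact: dotv_ge0.
apply: le_trans (CS _ _) _.
have h1 := HK w; have h2 := dotv_ge0 w.
move: h1 h2; set a := dotv w w; set b := dotv _ _ => h1 h2; nra.
Qed.


Lemma dotv0r n (v : 'cV[R]_n) : dotv v 0 = 0.
Proof. by rewrite /dotv big1 // => i _; rewrite mxE mulr0. Qed.

Lemma normalize n (S : 'M[R]_n) v : 0 < dotv v v ->
  let w := (Num.sqrt (dotv v v))^-1 *: v in
  dotv w w = 1 /\ dotv w (S *m w) = dotv v (S *m v) / dotv v v.
Proof.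
move=> hv w; rewrite /w -scalemxAr !dotvZl !dotvZr.
have hs : Num.sqrt (dotv v v) != 0 by rewrite sqrtr_eq0 -ltNge.
have hs2 : Num.sqrt (dotv v v) ^+ 2 = dotv v v by rewrite sqr_sqrtr // ltW.
have hv0 : dotv v v != 0 by rewrite gt_eqF.
split.
  by rewrite mulrA -expr2 exprVn hs2 mulVf.
by rewrite mulrA -expr2 exprVn hs2 mulrC.
Qed.

Lemma Mform n (S : 'M[R]_n) mu v :
  dotv v ((mu%:M - S) *m v) = mu * dotv v v - dotv v (S *m v).
Proof. by rewrite mulmxBl mul_scalar_mx dotvDr dotvNr dotvZr. Qed.

Lemma rayleigh n (S : 'M[R]_n) : S^T = S ->
  forall v, dotv v (S *m v) <= lambda_max S * dotv v v.
Proof.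
move=> hS v.
case: n S hS v => [|k] S hS v.
  by rewrite /dotv !big_ord0 mulr0.
pose Q := [set r : R | exists v : 'cV[R]_k.+1, dotv v v = 1 /\ r = dotv v (S *m v)].
have [B [B0 HB]] := form_bound S.
have hQ : has_sup Q.
  split.
    pose c : 'cV[R]_k.+1 := const_mx 1.
    have hc : 0 < dotv c c.
      rewrite /dotv; under eq_bigr do rewrite mxE mul1r.
      by rewrite sumr_const card_ord ltr0n.
    have [h1 h2] := normalize S hc.
    by eexists; exists ((Num.sqrt (dotv c c))^-1 *: c); split; [exact: h1|].
  exists B => r [w [hw ->]]; by have := HB w; rewrite hw mulr1.
pose mu := sup Q.
have P1 : forall v, dotv v (S *m v) <= mu * dotv v v.
  move=> u; have [h0|hpos] := eqVneq (dotv u u) 0.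
    by rewrite (dotv_eq0 h0) mulmx0 !dotv0r mulr0.
  have hp : 0 < dotv u u by rewrite lt_neqAle eq_sym hpos dotv_ge0.
  have [h1 h2] := normalize S hp.
  have : Q (dotv u (S *m u) / dotv u u).
    by exists ((Num.sqrt (dotv u u))^-1 *: u); split.
  move=> /(sup_upper_bound hQ); rewrite -/mu.
  by rewrite ler_pdivrMr.
pose M := mu%:M - S.
have MT : M^T = M by rewrite /M linearB /= tr_scalar_mx hS.
have Mpos : forall v, 0 <= dotv v (M *m v).
  by move=> u; rewrite /M Mform subr_ge0.
have Mnu : M \notin unitmx.
  apply/negP => Mu.
  have [KN [KN0 HKN]] := op_bound (invmx M).
  have [BM [BM0 HBM]] := form_bound M.
  pose P := KN * BM.
  have P0 : 0 <= P by rewrite mulr_ge0.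
  pose eps := (P + 1)^-1.
  have eps0 : 0 < eps by rewrite invr_gt0; lra.
  have [r [u [hu ->]]] := sup_adherent eps0 hQ.
  rewrite -/mu => hr.
  pose q := dotv u (M *m u).
  have hq : q = mu - dotv u (S *m u) by rewrite /q /M Mform hu mulr1.
  have q0 : 0 <= q := Mpos u.
  have qe : q < eps by rewrite hq; lra.
  pose w := M *m u.
  have hww : dotv w (M *m u) = dotv w w by [].
  have cs := CS_form w u MT Mpos.
  rewrite hww in cs.
  have hwMw := HBM w.
  have wMw0 := Mpos w.
  have ww0 := dotv_ge0 w.
  have cs2 : dotv w w ^+ 2 <= BM * dotv w w * q.
    apply: le_trans cs _; rewrite -/q; apply: ler_wpM2r => //.
  have wwq : dotv w w <= BM * q.
    move: cs2 ww0; set a := dotv w w => cs2 a0.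
    have [->|an] := eqVneq a 0; first by rewrite mulr_ge0.
    have ap : 0 < a by rewrite lt_neqAle eq_sym an a0.
    by rewrite -(ler_pM2r ap) -expr2 (le_trans cs2) // mulrAC.
  have hv : invmx M *m w = u by rewrite /w mulKmx.
  have h1 := HKN w; rewrite hv hu in h1.
  have h2 : KN * dotv w w <= P * q by rewrite /P -mulrA ler_wpM2l.
  have h3 : P * q <= P * eps by rewrite ler_wpM2l // ltW.
  have h4 : P * eps < 1 by rewrite /eps ltr_pdivrMr; lra.
  by have := le_lt_trans (le_trans h1 (le_trans h2 h3)) h4; rewrite ltxx.
have eig : eigenvalue S mu.
  rewrite /eigenvalue /eigenspace kermx_eq0 row_free_unit.
  have -> : S - mu%:M = (-1) *: M by rewrite /M scaleN1r opprB.
  by rewrite unitmxZ // unitrN1.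
have hE : has_sup [set a : R | eigenvalue S a].
  split; first by exists mu.
  exists mu => a /eigenvalueP [x hx x0].
  pose u := x^T.
  have hSu : S *m u = a *: u by rewrite /u -{1}hS -trmx_mul hx linearZ.
  have hu0 : 0 < dotv u u.
    rewrite lt_neqAle eq_sym dotv_ge0 andbT; apply/negP => /eqP /dotv_eq0 h.
    by move: x0; rewrite -(trmxK x) -/u h linear0 eqxx.
  have := P1 u; rewrite hSu dotvZr.
  by rewrite ler_pM2r.
have : mu <= lambda_max S by apply: sup_upper_bound.
move=> hmu; apply: le_trans (P1 v) _.
by rewrite ler_wpM2r // dotv_ge0.
Qed.


Lemma sqrt_bound (x b c : R) : 0 <= c -> x ^+ 2 <= b * c ^+ 2 -> x <= Num.sqrt b * c.
Proof.
move=> c0 h.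
have [b0|bn] := leP b 0.
  have : x ^+ 2 <= 0 by apply: le_trans h _; rewrite mulr_le0_ge0 ?sqr_ge0.
  rewrite (ler0_sqrtr b0) mul0r => hx.
  have : x ^+ 2 = 0 by apply/eqP; rewrite eq_le hx sqr_ge0.
  by move/eqP; rewrite sqrf_eq0 => /eqP ->.
have hx : `|x| <= Num.sqrt (b * c ^+ 2) by rewrite -sqrtr_sqr ler_wsqrtr.
rewrite sqrtrM in hx; last exact: ltW.
rewrite (sqrtr_sqr c) (ger0_norm c0) in hx.
have := ler_norm x.
move=> hn; exact: (le_trans hn hx).
Qed.

Lemma vnorm2_ge0 n (x : 'cV[R]_n) : 0 <= vnorm2 x.
Proof. by rewrite vnorm2E sqrtr_ge0. Qed.

Lemma vnorm2_sq n (x : 'cV[R]_n) : vnorm2 x ^+ 2 = dotv x x.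
Proof. by rewrite vnorm2E sqr_sqrtr // dotv_ge0. Qed.

Lemma dot_le n (u w : 'cV[R]_n) : dotv u w <= vnorm2 u * vnorm2 w.
Proof.
rewrite [vnorm2 u]vnorm2E; apply: sqrt_bound; first exact: vnorm2_ge0.
by rewrite vnorm2_sq CS.
Qed.

Lemma vnorm2_tri n (u w : 'cV[R]_n) : vnorm2 (u + w) <= vnorm2 u + vnorm2 w.
Proof.
rewrite -[_ + _ in X in _ <= X]mul1r -sqrtr1; apply: sqrt_bound.
  by rewrite addr_ge0 ?vnorm2_ge0.
rewrite mul1r vnorm2_sq dotvDl !dotvDr (dotvC w u) sqrrD -!vnorm2_sq.
have := dot_le u w; lra.
Qed.

Lemma mx_form n (A : 'M[R]_n) v : (v^T *m A *m v) 0 0 = dotv v (A *m v).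
Proof. by rewrite -mulmxA mxE; apply: eq_bigr => i _; rewrite mxE. Qed.

Lemma diag_form n (T : 'M[R]_n) v : is_diag_mx T ->
  dotv v (T *m v) = \sum_i T i i * v i 0 ^+ 2.
Proof.
move=> /is_diag_mxP hT; apply: eq_bigr => i _.
rewrite mxE (bigD1 i) //= big1 ?addr0; first by rewrite expr2; ring.
by move=> j ji; rewrite hT ?mul0r // eq_sym.
Qed.


Lemma zid (V : zmodType) (a a' p p' z : V) : a + p - (a' + p') = a - a' + z + (p - p' - z).
Proof. by rewrite -(addrA (a - a')) (addrCA z (p - p') (- z)) subrr addr0 opprD addrACA. Qed.

End Aux.

Theorem mainTheorem5 (R : realType) (m n0 n1 : nat) (alpha beta : R)
  (varphi : R -> R)
  (H : 'M[R]_(m, n0)) (G : 'M[R]_(m, n1)) (W : 'M[R]_(n1, n0))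
  (T : 'M[R]_n1) :
  0 <= alpha -> alpha <= beta ->
  (forall a b : R, a != b ->
     alpha <= (varphi a - varphi b) / (a - b) <= beta) ->
  is_diag_mx T ->
  loewner_le (G^T *m G) T ->
  let h := fun x : 'cV[R]_n0 => H *m x + G *m compwise varphi (W *m x) in
  forall x x' : 'cV[R]_n0,
    vnorm2 (h x - h x') <=
      (specnorm (H + ((alpha + beta) / 2) *: (G *m W))
       + (beta - alpha) / 2 * Num.sqrt (specnorm (W^T *m T *m W)))
      * vnorm2 (x - x').
Proof.
move=> a0 ab hsl Td [_ [TT hL]] h x x'.
set c := (alpha + beta) / 2.
set e := (beta - alpha) / 2.
have e0 : 0 <= e by rewrite /e; lra.
set d := x - x'.
set A := H + c *: (G *m W).
set y := W *m d.
set r := compwise varphi (W *m x) - compwise varphi (W *m x') - c *: y.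
have hdiff : h x - h x' = A *m d + G *m r.
  rewrite /h /A /r /y /d mulmxDl -scalemxAl !mulmxBr -scalemxAr mulmxBr !mulmxA.
  exact: zid.
have hr : forall i, r i 0 ^+ 2 <= e ^+ 2 * y i 0 ^+ 2.
  move=> i; set a := (W *m x) i 0; set b := (W *m x') i 0.
  have hr0 : r i 0 = varphi a - varphi b - c * (a - b).
    by rewrite /r /y /d /a /b /compwise mulmxBr !mxE.
  rewrite hr0.
  have -> : y i 0 = a - b by rewrite /y /d /a /b mulmxBr !mxE.
  have [<-|ab'] := eqVneq a b.
    by rewrite !subrr mulr0 subr0 expr0n /= mulr0.
  have hab : a - b != 0 by rewrite subr_eq0.
  have /andP [s1 s2] := hsl a b ab'.
  move: s1 s2; set s := (varphi a - varphi b) / (a - b) => s1 s2.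
  have -> : varphi a - varphi b = s * (a - b) by rewrite /s divfK.
  have -> : s * (a - b) - c * (a - b) = (s - c) * (a - b) by ring.
  rewrite exprMn ler_wpM2r ?sqr_ge0 // /c /e; nra.
have hA : vnorm2 (A *m d) <= specnorm A * vnorm2 d.
  rewrite /specnorm; apply: sqrt_bound; first exact: vnorm2_ge0.
  rewrite !vnorm2_sq dotv_tr dotvC mulmxA; apply: rayleigh.
  by rewrite trmx_mul trmxK.
set Sn := W^T *m T *m W.
have SnT : Sn^T = Sn by rewrite /Sn !trmx_mul trmxK TT mulmxA.
have hSn : dotv d (Sn *m d) <= specnorm Sn * dotv d d.
  rewrite /specnorm; apply: sqrt_bound; first exact: dotv_ge0.
  apply: le_trans (CS d (Sn *m d)) _.
  have sym2 : (Sn^T *m Sn)^T = Sn^T *m Sn by rewrite trmx_mul trmxK.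
  have := rayleigh sym2 d; rewrite -mulmxA dotv_tr trmxK.
  have := dotv_ge0 d.
  set L := lambda_max _; set q := dotv d d; set z := dotv _ _ => q0 hz.
  nra.
have GG : forall v, dotv v ((G^T *m G) *m v) = dotv (G *m v) (G *m v).
  by move=> v; rewrite -mulmxA dotv_tr trmxK.
have hLd : forall v, dotv v ((G^T *m G) *m v) <= dotv v (T *m v).
  move=> v; have := hL v; rewrite mx_form mulmxBl dotvDr dotvNr subr_ge0 //.
have Tii : forall i, 0 <= T i i.
  move=> i; pose v : 'cV[R]_n1 := delta_mx i 0.
  have := hLd v; rewrite GG diag_form //.
  rewrite (bigD1 i) //= big1 ?addr0; last first.
    by move=> j ji; rewrite /v mxE (negbTE ji) /= expr0n /= mulr0.
  rewrite /v mxE !eqxx /= expr1n mulr1 => hh.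
  exact: le_trans (dotv_ge0 _) hh.
have hGr : dotv (G *m r) (G *m r) <= e ^+ 2 * (specnorm Sn * dotv d d).
  rewrite -GG; apply: le_trans (hLd r) _.
  apply: le_trans _ (ler_wpM2l (sqr_ge0 e) hSn).
  have -> : dotv d (Sn *m d) = dotv y (T *m y).
    by rewrite /Sn /y -!mulmxA dotv_tr trmxK dotvC.
  rewrite !diag_form // mulr_sumr; apply: ler_sum => i _.
  rewrite [leRHS]mulrCA; apply: ler_wpM2l => //.
have hGn : vnorm2 (G *m r) <= e * Num.sqrt (specnorm Sn) * vnorm2 d.
  have -> : e * Num.sqrt (specnorm Sn) = Num.sqrt (e ^+ 2 * specnorm Sn).
    by rewrite sqrtrM ?sqr_ge0 // sqrtr_sqr ger0_norm.
  apply: sqrt_bound; first exact: vnorm2_ge0.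
  rewrite !vnorm2_sq; move: hGr; rewrite mulrA.
  done.
have := vnorm2_tri (A *m d) (G *m r); rewrite -hdiff => ht.
apply: le_trans ht _.
rewrite mulrDl; exact: lerD hA hGn.
Qed.
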